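(* Any streaming algorithm (possibly randomized, succeeding with constant probability) for the $k$-connectivity augmentation problem with unweighted links in the fully streaming model, even when $k$ is known, that approximates the optimal solution to any finite factor requires $\Omega(nk)$ bits of space.
   Context: $k$-connectivity augmentation problem: given a $(k-1)$-edge-connected $n$-vertex graph $G=(V,E)$ (possibly with parallel edges) and a set of links $L\subseteq\binom{V}{2}$, find a minimum-cardinality $S\subseteq L$ such that $(V,E\cup S)$ is $k$-edge-connected. Fully streaming model: the edges of $E$ and the links of $L$ arrive in a single stream in an arbitrary interleaved order, and all storage counts toward space. *)

(* Defs.v *)
From HB Require Import structures.
From Stdlib Require Import Rdefinitions.
From mathcomp Require Import all_boot all_order all_algebra.
From mathcomp Require Import Rstruct.
Set Implicit Arguments. Unset Strict Implicit. Unset Printing Implicit Defensive.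
Import Order.TTheory GRing.Theory Num.Theory.

(* Vertex set V = 'I_n.  A stream item is (true, (u,v)) for an edge of E
   (parallel edges = repeated items) or (false, (u,v)) for a link of L. *)
Definition item (n : nat) : Type := (bool * ('I_n * 'I_n))%type.

Definition npair n (u v : 'I_n) : 'I_n * 'I_n :=
  if (u <= v)%N then (u, v) else (v, u).

Definition stream_edges n (st : seq (item n)) : seq ('I_n * 'I_n) :=
  [seq x.2 | x <- st & x.1].

Definition stream_links n (st : seq (item n)) : seq ('I_n * 'I_n) :=
  [seq npair x.2.1 x.2.2 | x <- st & ~~ x.1].

Definition cut_size n (X : {set 'I_n}) (es : seq ('I_n * 'I_n)) : nat :=
  count (fun e => (e.1 \in X) != (e.2 \in X)) es.

Definition k_edge_connected n (k : nat) (es : seq ('I_n * 'I_n)) : bool :=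
  [forall X : {set 'I_n}, (X != set0) && (X != [set: 'I_n]) ==> (k <= cut_size X es)%N].

Definition valid_instance n (k : nat) (st : seq (item n)) : Prop :=
  all (fun x => x.2.1 != x.2.2) st /\ uniq (stream_links st) /\
  k_edge_connected (k - 1) (stream_edges st).

Definition feasible_aug n (k : nat) (st : seq (item n)) (S : {set 'I_n * 'I_n}) : bool :=
  (S \subset [set e | e \in stream_links st]) &&
  k_edge_connected k (stream_edges st ++ enum S).

Definition approx_solution n (k alpha : nat) (st : seq (item n)) (S : {set 'I_n * 'I_n}) : bool :=
  feasible_aug k st S &&
  [forall T : {set 'I_n * 'I_n}, feasible_aug k st T ==> (#|S| <= alpha * #|T|)%N].

(* Deterministic streaming algorithm with memory of exactly s bits
   (state = s-bit string), arbitrary (non-uniform) transition and output maps. *)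
Record stream_alg (n s : nat) := StreamAlg {
  sa_init : s.-tuple bool;
  sa_step : item n -> s.-tuple bool -> s.-tuple bool;
  sa_out  : s.-tuple bool -> {set 'I_n * 'I_n}
}.

Definition run_alg n s (A : stream_alg n s) (st : seq (item n)) : {set 'I_n * 'I_n} :=
  sa_out A (foldl (fun m x => sa_step A x m) (sa_init A) st).

Definition is_distr (Omega : finType) (mu : Omega -> R) : Prop :=
  (forall w, (0 <= mu w)%R) /\ (\sum_(w : Omega) mu w = 1)%R.

Definition prob (Omega : finType) (mu : Omega -> R) (P : pred Omega) : R :=
  (\sum_(w : Omega | P w) mu w)%R.

(* Main.v *)
Require Import Defs.
From HB Require Import structures.
From Stdlib Require Import Rdefinitions.
From mathcomp Require Import all_boot all_order all_algebra.
From mathcomp Require Import Rstruct.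
From mathcomp Require Import zify ring lra.
Import Order.TTheory GRing.Theory Num.Theory.
Set Implicit Arguments. Unset Strict Implicit. Unset Printing Implicit Defensive.

Lemma sum_bool_card (I : finType) (P : pred I) : \sum_i (P i : nat) = #|P|.
Proof. rewrite -sum1_card [RHS]big_mkcond /=; apply: eq_bigr => i _; rewrite unfold_in; by case: (P i). Qed.

Lemma sum_const_full (I : finType) (c : nat) : \sum_(i : I) c = #|I| * c.
Proof. by rewrite sum_nat_const. Qed.

Lemma prod_const_full (I : finType) (c : nat) : \prod_(i : I) c = c ^ #|I|.
Proof. by rewrite prod_nat_const. Qed.

Lemma prod_if (I : finType) (P : pred I) (a b : nat) :
  \prod_i (if P i then a else b) = a ^ #|P| * b ^ #|predC P|.
Proof.
rewrite (bigID P) /= -!prod_nat_const; congr (_ * _); apply eq_bigr => i;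
  rewrite ?unfold_in /=.
  by move=> ->.
by move=> /negbTE ->.
Qed.

Lemma exp_mono a b e : a <= b -> a ^ e <= b ^ e.
Proof. move=> hab; elim: e => [|e IH] //; by rewrite !expnS leq_mul. Qed.

Lemma index_lb (J S : finType) (q : nat) (f : {ffun J -> bool} -> S) (g : S -> J -> bool) :
  #|J| = 5 * q -> 0 < q ->
  2 * #|J| * 2 ^ #|J| <= 3 * \sum_(x : {ffun J -> bool}) \sum_(i : J) (g (f x) i == x i : nat) ->
  3456 ^ q <= 15 * #|S| * 3125 ^ q.
Proof.
move=> hJ hq H.
set m := #|J| in hJ H *.
pose dist (x : {ffun J -> bool}) := #|[pred i | g (f x) i != x i]|.
pose B := [pred x : {ffun J -> bool} | dist x <= 2*q].
have agree x : \sum_i (g (f x) i == x i : nat) = m - dist x.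
  rewrite sum_bool_card /m -(cardC [pred i | g (f x) i == x i]) /dist addnK.
  by apply: eq_card => i; rewrite !inE.
have H1 : \sum_(x : {ffun J -> bool}) \sum_i (g (f x) i == x i : nat) <= #|B| * m + 2^m * (3*q).
  have hb : forall x, \sum_i (g (f x) i == x i : nat) <= (x \in B) * m + 3*q.
    move=> x; rewrite agree; case: (boolP (x \in B)) => hx /=.
      by rewrite mul1n; apply: leq_trans (leq_subr _ _) (leq_addr _ _).
    rewrite mul0n add0n; move: hx; rewrite inE /= -ltnNge => hx; lia.
  apply: (@leq_trans (\sum_(x : {ffun J -> bool}) ((x \in B) * m + 3 * q))).
    by apply: leq_sum => x _; exact: hb.
  rewrite big_split /= -big_distrl /= sum_bool_card sum_const_full card_ffun card_bool.
  by [].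
have H2 : #|B| * (2^(2*q) * 3^(3*q)) <= #|S| * 5^m.
  pose w (a : J -> bool) (x : {ffun J -> bool}) := \prod_i (if a i != x i then 2 else 3).
  have wsum a : \sum_x w a x = 5^m.
    rewrite /w -(bigA_distr_bigA (fun i b => if a i != b then 2 else 3)) /=.
    rewrite (eq_bigr (fun _ => 5)) ?prod_const_full // => i _.
    by rewrite big_bool /=; case: (a i).
  have wlb x : x \in B -> 2^(2*q) * 3^(3*q) <= w (g (f x)) x.
    rewrite inE /= /w => hx.
    rewrite (prod_if [pred i | g (f x) i != x i]).
    have hc : #|predC [pred i | g (f x) i != x i]| = m - dist x.
      rewrite /m -(cardC [pred i | g (f x) i != x i]) /dist addKn //.
    rewrite hc -/(dist x).
    have -> : 2 * q = dist x + (2 * q - dist x) by lia.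
    have -> : m - dist x = (2 * q - dist x) + 3 * q by lia.
    rewrite (expnD 2) (expnD 3) -mulnA leq_mul // leq_mul // exp_mono.
    by [].
    by [].
  apply: (@leq_trans (\sum_(x in B) w (g (f x)) x)).
    rewrite -sum_nat_const; exact: leq_sum.
  apply: (@leq_trans (\sum_x w (g (f x)) x)).
    by rewrite [X in _ <= X](bigID (mem B)) /= leq_addr.
  apply: (@leq_trans (\sum_x \sum_(s : S) w (g s) x)).
    by apply: leq_sum => x _; rewrite (bigD1 (f x)) //= leq_addr.
  rewrite exchange_big /= (eq_bigr (fun _ => 5^m)) ?sum_const_full // => s _.
have H3 : 2 ^ m <= 15 * #|B|.
  have : q * 2 ^ m <= q * (15 * #|B|).
    move: H H1; rewrite hJ; set P := 2 ^ (5 * q); set b := #|B|; nia.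
  by rewrite leq_pmul2l.
have E1 : 3456 ^ q = 2 ^ m * (2^(2*q) * 3^(3*q)).
  by rewrite hJ !expnM -!expnMn.
have E2 : 3125 ^ q = 5 ^ m by rewrite hJ expnM.
rewrite E1 E2.
apply: (@leq_trans (15 * #|B| * (2 ^ (2 * q) * 3 ^ (3 * q)))).
  by rewrite leq_mul.
by rewrite -!mulnA leq_mul // mulnA.
Qed.

Lemma exp_bound_gen a b q s : 0 < a -> a <= b -> 2 * a ^ 7 <= b ^ 7 ->
  b ^ q <= 15 * 2 ^ s * a ^ q -> q < 7 * (s + 4).
Proof.
move=> ha hab key H.
have hq := divn_eq q 7.
set p := q %/ 7 in hq; set r := q %% 7 in hq.
have hr : r < 7 by rewrite ltn_mod.
clearbody p r.
have L1 : 2 ^ p * a ^ q <= b ^ q.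
  have E : forall c, c ^ q = (c ^ 7) ^ p * c ^ r.
    by move=> c; rewrite {1}hq expnD (mulnC p 7) expnM.
  rewrite !E mulnA -expnMn; apply: leq_mul; first exact: exp_mono key.
  exact: exp_mono hab.
have L2 : 2 ^ p <= 15 * 2 ^ s.
  have := leq_trans L1 H; rewrite leq_pmul2r //; by rewrite expn_gt0 ha.
have L3 : p < s + 4.
  rewrite -(@ltn_exp2l 2) // expnD; apply: leq_ltn_trans L2 _.
  by rewrite mulnC ltn_pmul2l ?expn_gt0.
lia.
Qed.

Lemma exp_bound q s : 3456 ^ q <= 15 * 2 ^ s * 3125 ^ q -> q < 7 * (s + 4).
Proof.
apply: exp_bound_gen; [by [] | by [] | lia].
Qed.

Lemma decomp (D x y a b : nat) : a < D -> b < D -> D * x + a = D * y + b -> x = y /\ a = b.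
Proof.
move=> ha hb e.
have D0 : 0 < D by apply: leq_ltn_trans ha.
have e1 := congr1 (fun t => t %/ D) e; have e2 := congr1 (fun t => t %% D) e.
move: e1 e2; rewrite /= ![D * _]mulnC !divnMDl // !modnMDl !divn_small // !modn_small //.
by rewrite !addn0 => -> ->.
Qed.

Lemma count_flatten_ge (T : Type) (U : eqType) (p : pred T) (F : U -> seq T) (s : seq U) (z : U) :
  z \in s -> count p (F z) <= count p (flatten (map F s)).
Proof.
elim: s => [|y s IH] //=; rewrite in_cons => /orP [/eqP ->|hz]; rewrite count_cat; first exact: leq_addr.
by apply: leq_trans (IH hz) (leq_addl _ _).
Qed.

Section Constr.
Variables (N k d B : nat).
Hypotheses (hk : 0 < k) (h2d : 2 * d <= k.+1) (hB : 2 * d * B <= N).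

Local Notation Jt := ('I_B * ('I_d * 'I_d))%type.
Definition av (j : Jt) : nat := (2 * d * j.1 + j.2.1).+1.
Definition bv (j : Jt) : nat := (2 * d * j.1 + (d + j.2.2)).+1.

Lemma av_le j : av j < N.+1.
Proof.
rewrite /av ltnS; have h1 : 2 * d * j.1.+1 <= 2 * d * B by rewrite leq_mul2l ltn_ord orbT.
have := ltn_ord j.2.1; nia.
Qed.
Lemma bv_le j : bv j < N.+1.
Proof.
rewrite /bv ltnS; have h1 : 2 * d * j.1.+1 <= 2 * d * B by rewrite leq_mul2l ltn_ord orbT.
have := ltn_ord j.2.2; nia.
Qed.

Local Notation V := 'I_N.+1.
Definition aV j : V := inord (av j).
Definition bV j : V := inord (bv j).
Definition hub : V := ord0.

Lemma aVE j : (aV j : nat) = av j. Proof. exact: inordK (av_le j). Qed.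
Lemma bVE j : (bV j : nat) = bv j. Proof. exact: inordK (bv_le j). Qed.

Lemma aV_hub j : (aV j == hub) = false.
Proof. by apply/negbTE; rewrite -val_eqE /= aVE. Qed.
Lemma bV_hub j : (bV j == hub) = false.
Proof. by apply/negbTE; rewrite -val_eqE /= bVE. Qed.

Lemma aV_bV j j' : (aV j == bV j') = false.
Proof.
apply/negbTE/negP; rewrite -val_eqE /= aVE bVE /av /bv eqSS => /eqP e.
have h1 : (j.2.1 : nat) < 2 * d by have := ltn_ord j.2.1; lia.
have h2 : d + j'.2.2 < 2 * d by have := ltn_ord j'.2.2; lia.
have [_ e2] := decomp h1 h2 e.
by move: (ltn_ord j.2.1); rewrite e2 ltnNge leq_addr.
Qed.

Lemma aV_eq j j' : aV j = aV j' -> j.1 = j'.1 /\ j.2.1 = j'.2.1.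
Proof.
move/(congr1 val); rewrite /= !aVE /av => /eq_add_S e.
have hd : forall (u : 'I_d), u < 2 * d by move=> u; have := ltn_ord u; lia.
have [e1 e2] := decomp (hd _) (hd _) e; split; exact: val_inj.
Qed.

Lemma bV_eq j j' : bV j = bV j' -> j.1 = j'.1 /\ j.2.2 = j'.2.2.
Proof.
move/(congr1 val); rewrite /= !bVE /bv => /eq_add_S e.
have hd : forall (u : 'I_d), d + u < 2 * d by move=> u; have := ltn_ord u; lia.
have [e1 e2] := decomp (hd _) (hd _) e; split; first exact: val_inj.
apply: val_inj; exact: (addnI e2).
Qed.

Lemma ab_inj j j' : aV j = aV j' -> bV j = bV j' -> j = j'.
Proof.
move=> /aV_eq [e1 e2] /bV_eq [_ e3].
by case: j e1 e2 e3 => j1 [u v]; case: j' => j1' [u' v'] /= -> -> ->.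
Qed.

Definition edge (u v : V) : item N.+1 := (true, (u, v)).
Definition link (u v : V) : item N.+1 := (false, (u, v)).
Definition pre (j : Jt) (b : bool) : seq (item N.+1) :=
  if b then [:: edge (aV j) (bV j)] else [:: edge (aV j) hub; edge (bV j) hub].
Definition pfx (x : {ffun Jt -> bool}) : seq (item N.+1) :=
  flatten [seq pre j (x j) | j <- index_enum Jt].
Definition X0 (i : Jt) : {set V} := [set aV i; bV i].
Definition cross (X : {set V}) (e : V * V) := (e.1 \in X) != (e.2 \in X).
Definition cnt (X : {set V}) (st : seq (item N.+1)) :=
  count (fun it : item N.+1 => it.1 && cross X it.2) st.
Definition c0 (i : Jt) := cnt (X0 i) (pfx [ffun => false]).
Definition star (i : Jt) : seq (item N.+1) :=
  flatten [seq nseq k (edge hub z) | z <- enum V & [&& z != aV i, z != bV i & z != hub]].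
Definition query (i : Jt) : seq (item N.+1) :=
  star i ++ nseq k (edge (aV i) (bV i)) ++ nseq (k.+1 - c0 i) (edge (aV i) hub)
    ++ [:: link (aV i) hub].
Definition inst x i := pfx x ++ query i.

Lemma cut_cnt X st : cut_size X (stream_edges st) = cnt X st.
Proof. by rewrite /cut_size /stream_edges count_map count_filter; apply: eq_count => it; rewrite /= andbC. Qed.

Lemma cnt_cat X s1 s2 : cnt X (s1 ++ s2) = cnt X s1 + cnt X s2.
Proof. exact: count_cat. Qed.

Lemma cnt_prefix X x : cnt X (pfx x) = \sum_j cnt X (pre j (x j)).
Proof. by rewrite /cnt count_flatten sumnE !big_map. Qed.

Lemma hub_X0 i : (hub \in X0 i) = false.
Proof. by rewrite !inE eq_sym aV_hub eq_sym bV_hub. Qed.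

Lemma pre_eq j i : j != i -> cnt (X0 i) (pre j true) = cnt (X0 i) (pre j false).
Proof.
move=> hji; rewrite /cnt /pre /= /cross /= hub_X0 !inE aV_bV [bV j == aV i]eq_sym aV_bV /= !orbF.
case: (aV j =P aV i) => ea; case: (bV j =P bV i) => eb //=.
by move: hji; rewrite (ab_inj ea eb) eqxx.
Qed.

Lemma prefix_eq x i : cnt (X0 i) (pfx x) + 2 * x i = c0 i.
Proof.
rewrite /c0 !cnt_prefix (bigD1 i) // [in RHS](bigD1 i) //= ffunE -addnA addnC -addnA.
rewrite [in RHS]addnC; congr (_ + _).
  apply: eq_bigr => j hj; rewrite ffunE; case: (x j) => //; exact: pre_eq.
rewrite /cnt /pre; case: (x i) => /=; rewrite /cross /= hub_X0 !inE !eqxx ?aV_bV ?[bV i == aV i]eq_sym ?aV_bV //.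
Qed.

Lemma sum_bool_card' (I : finType) (P : pred I) : \sum_i (P i : nat) = #|P|.
Proof. rewrite -sum1_card [RHS]big_mkcond /=; apply: eq_bigr => i _; rewrite unfold_in; by case: (P i). Qed.

Lemma c0_le i : c0 i <= 2 * d.
Proof.
rewrite /c0 cnt_prefix.
have -> : \sum_j cnt (X0 i) (pre j ([ffun=> false] j)) =
          \sum_j ((aV j == aV i) : nat) + \sum_j ((bV j == bV i) : nat).
  rewrite -big_split /=; apply: eq_bigr => j _.
  rewrite ffunE /cnt /pre /cross /= hub_X0 !inE aV_bV [bV j == aV i]eq_sym aV_bV /= ?orbF ?addn0;
  by case: (aV j == aV i); case: (bV j == bV i).
rewrite (sum_bool_card' (fun j => aV j == aV i)) (sum_bool_card' (fun j => bV j == bV i)) mul2n -addnn.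
apply: leq_add.
  apply: (@leq_trans #|[set (i.1, (i.2.1, v)) | v : 'I_d]|).
    apply: subset_leq_card; apply/subsetP => j; rewrite unfold_in /= => /eqP /aV_eq [e1 e2].
    apply/imsetP; exists j.2.2 => //; by case: j e1 e2 => j1 [u v] /= -> ->.
  by apply: leq_trans (leq_imset_card _ _) _; rewrite card_ord.
apply: (@leq_trans #|[set (i.1, (u, i.2.2)) | u : 'I_d]|).
  apply: subset_leq_card; apply/subsetP => j; rewrite unfold_in /= => /eqP /bV_eq [e1 e2].
  apply/imsetP; exists j.2.1 => //; by case: j e1 e2 => j1 [u v] /= -> ->.
by apply: leq_trans (leq_imset_card _ _) _; rewrite card_ord.
Qed.

Lemma c0_ge i : 2 <= c0 i.
Proof.
rewrite -(prefix_eq [ffun j => j == i] i) ffunE eqxx; exact: leq_addl.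
Qed.


Lemma star_zero i : cnt (X0 i) (star i) = 0.
Proof.
rewrite /cnt /star count_flatten sumnE !big_map big1_seq // => z /andP [_].
rewrite mem_filter => /andP [/and3P [za zb zh] _].
by rewrite count_nseq /cross /= hub_X0 !inE (negbTE za) (negbTE zb) /= mul0n.
Qed.

Lemma cnt_query_X0 i : cnt (X0 i) (query i) = k.+1 - c0 i.
Proof.
rewrite /query !cnt_cat star_zero /cnt !count_nseq /= /cross /= hub_X0 !inE !eqxx /= orbT.
by rewrite ?muln0 ?mul0n ?muln1 ?mul1n ?add0n ?addn0.
Qed.

Lemma cut_X0 x i : cnt (X0 i) (inst x i) = if x i then k.-1 else k.+1.
Proof.
rewrite /inst cnt_cat cnt_query_X0; have := prefix_eq x i; have := c0_le i; have := c0_ge i.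
case: (x i) => /=; lia.
Qed.

Lemma cnt_setC X st : cnt (~: X) st = cnt X st.
Proof.
apply: eq_count => it; rewrite /cross !inE.
by case: (it.2.1 \in X); case: (it.2.2 \in X).
Qed.

Lemma query_cut i X : X != set0 -> X != setT -> X != X0 i -> ~: X != X0 i ->
  k <= cnt X (query i).
Proof.
move=> hX0 hXT hX1 hX2.
rewrite /query !cnt_cat.
case: (boolP [exists z, [&& z != aV i, z != bV i, z != hub & (z \in X) != (hub \in X)]]).
  case/existsP => z /and4P [za zb zh zx].
  apply: leq_trans (leq_addr _ _).
  apply: (@leq_trans (cnt X (nseq k (edge hub z)))).
    by rewrite /cnt count_nseq /cross /= eq_sym zx mul1n.
  apply: count_flatten_ge.
  by rewrite mem_filter za zb zh mem_enum.
move/existsPn => hz.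
case: (boolP ((aV i \in X) != (bV i \in X))) => hab.
  apply: (@leq_trans (cnt X (nseq k (edge (aV i) (bV i))))).
    by rewrite /cnt count_nseq /cross /= hab mul1n.
  lia.
move/negPn: hab => /eqP hab.
have memX y : (y \in X) = if (y == aV i) || (y == bV i) then (aV i \in X) else (hub \in X).
  case: (y =P aV i) => [->|ya] //=; case: (y =P bV i) => [->|yb] //=.
  case: (y =P hub) => [->|yh] //=.
  have := hz y; rewrite (introN eqP ya) (introN eqP yb) (introN eqP yh) /= negbK.
  by move/eqP.
exfalso; case hh: (hub \in X); case ha: (aV i \in X).
- apply: (negP hXT); apply/eqP/setP => y; rewrite inE memX ha hh; by case: ifP.
- apply: (negP hX2); apply/eqP/setP => y; rewrite !inE memX ha hh.
  by case: ((y == aV i) || (y == bV i)).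
- apply: (negP hX1); apply/eqP/setP => y; rewrite !inE memX ha hh.
  by case: ((y == aV i) || (y == bV i)).
- apply: (negP hX0); apply/eqP/setP => y; rewrite !inE memX ha hh.
  by case: ((y == aV i) || (y == bV i)).
Qed.

Lemma filter_edges (s : seq (item N.+1)) : all (fun it : item N.+1 => it.1) s ->
  [seq it <- s | ~~ it.1] = [::].
Proof. by elim: s => //= it s IH /andP [-> h] /=; exact: IH. Qed.

Lemma all_prefix x : all (fun it : item N.+1 => it.1) (pfx x).
Proof.
apply/allP => it /flattenP [s /mapP [j _ ->]]; rewrite /pre.
by case: (x j) => /=; rewrite !inE; [move/eqP -> | case/orP => /eqP ->].
Qed.

Lemma all_star i : all (fun it : item N.+1 => it.1) (star i).
Proof.
apply/allP => it /flattenP [s /mapP [z _ ->]].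
by rewrite mem_nseq => /andP [_ /eqP ->].
Qed.

Lemma filt_inst x i : [seq it <- inst x i | ~~ it.1] = [:: link (aV i) hub].
Proof.
have h3 : all (fun it : item N.+1 => it.1) (nseq k (edge (aV i) (bV i))) by rewrite all_nseq orbT.
have h4 : all (fun it : item N.+1 => it.1) (nseq (k.+1 - c0 i) (edge (aV i) hub)) by rewrite all_nseq orbT.
by rewrite /inst /query !filter_cat (filter_edges (all_prefix x)) (filter_edges (all_star i))
  (filter_edges h3) (filter_edges h4).
Qed.

Lemma links_inst x i : stream_links (inst x i) = [:: npair (aV i) hub].
Proof. by rewrite /stream_links filt_inst. Qed.

Lemma loops_inst x i : all (fun it : item N.+1 => it.2.1 != it.2.2) (inst x i).
Proof.
rewrite /inst /query !all_cat; apply/and5P; split.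
- apply/allP => it /flattenP [s /mapP [j _ ->]]; rewrite /pre.
  case: (x j) => /=; rewrite !inE; [move/eqP -> | case/orP => /eqP ->] => /=.
  + by rewrite aV_bV.
  + by rewrite aV_hub.
  + by rewrite bV_hub.
- apply/allP => it /flattenP [s /mapP [z hz ->]].
  rewrite mem_nseq => /andP [_ /eqP ->] /=.
  by rewrite eq_sym; move: hz; rewrite mem_filter => /andP [/and3P [_ _ ->]].
- by rewrite all_nseq /= aV_bV orbT.
- by rewrite all_nseq /= aV_hub orbT.
- by rewrite /= aV_hub.
Qed.

Definition ES x i := stream_edges (inst x i).

Lemma cut_general x i X : (X == X0 i) || (~: X == X0 i) ->
  cut_size X (ES x i) = if x i then k.-1 else k.+1.
Proof.
rewrite /ES cut_cnt; case/orP => /eqP e; first by rewrite e cut_X0.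
by rewrite -(cnt_setC X) e cut_X0.
Qed.

Lemma cut_other x i X : X != set0 -> X != setT -> ~~ ((X == X0 i) || (~: X == X0 i)) ->
  k <= cut_size X (ES x i).
Proof.
rewrite negb_or => h1 h2 /andP [h3 h4].
rewrite /ES cut_cnt /inst cnt_cat; apply: leq_trans (query_cut h1 h2 h3 h4) (leq_addl _ _).
Qed.

Lemma X0_ne0 i : X0 i != set0.
Proof. by apply/set0Pn; exists (aV i); rewrite !inE eqxx. Qed.
Lemma X0_neT i : X0 i != setT.
Proof. by apply/negP => /eqP e; have := hub_X0 i; rewrite e inE. Qed.

Lemma cut_cat X (s1 s2 : seq (V * V)) : cut_size X (s1 ++ s2) = cut_size X s1 + cut_size X s2.
Proof. exact: count_cat. Qed.

Lemma cross_npair X u v : cross X (npair u v) = cross X (u, v).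
Proof. by rewrite /npair; case: ifP => //= _; rewrite /cross /= eq_sym. Qed.

Lemma inst_props x i :
  valid_instance k (inst x i) /\ (exists S, feasible_aug k (inst x i) S) /\
  (forall alpha S, approx_solution k alpha (inst x i) S -> (S != set0) = x i).
Proof.
have conn_noS : x i = false -> k_edge_connected k (ES x i).
  move=> hx; apply/forallP => X; apply/implyP => /andP [h1 h2].
  case: (boolP ((X == X0 i) || (~: X == X0 i))) => hc.
    by rewrite cut_general // hx.
  exact: cut_other.
split; [split; [exact: loops_inst | split] | split].
- by rewrite links_inst.
- apply/forallP => X; apply/implyP => /andP [h1 h2].
  case: (boolP ((X == X0 i) || (~: X == X0 i))) => hc.
    rewrite cut_general //; case: (x i); lia.
  apply: leq_trans _ (cut_other x h1 h2 hc); exact: leq_subr.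
- exists [set npair (aV i) hub]; apply/andP; split.
    by apply/subsetP => e; rewrite !inE links_inst inE.
  apply/forallP => X; apply/implyP => /andP [h1 h2].
  rewrite cut_cat enum_set1.
  case: (boolP ((X == X0 i) || (~: X == X0 i))) => hc.
    rewrite cut_general // /cut_size /= -/(cross X _) cross_npair /cross /=.
    have -> : (aV i \in X) != (hub \in X).
      case/orP: hc => /eqP e; first by rewrite e hub_X0 !inE eqxx.
      have : aV i \in ~: X by rewrite e !inE eqxx.
      have : hub \notin ~: X by rewrite e hub_X0.
      by rewrite !inE negbK => hh ha; rewrite hh (negbTE ha).
    case: (x i) => /=; lia.
  by apply: leq_trans (cut_other x h1 h2 hc) (leq_addr _ _).
- move=> alpha S /andP [hf hall].
  case hx: (x i).
    apply/negP => /eqP hS; move: hf; rewrite hS /feasible_aug => /andP [_ /forallP /(_ (X0 i))].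
    rewrite X0_ne0 X0_neT /= enum_set0 cats0 -/(ES x i) cut_general ?eqxx // hx; lia.
  apply/negbTE; rewrite negbK -cards_eq0 -leqn0.
  move/forallP: hall => /(_ set0) /implyP hall.
  have hf0 : feasible_aug k (inst x i) set0.
    rewrite /feasible_aug sub0set enum_set0 cats0 /=; exact: conn_noS.
  by have := hall hf0; rewrite cards0 muln0.
Qed.

End Constr.

Lemma avg2 (Omega P : finType) (mu : Omega -> R) (corr : Omega -> P -> bool) :
  is_distr mu -> (forall p, (2%:R / 3%:R <= prob mu (fun w => corr w p))%R) ->
  exists w, (2 * #|P| <= 3 * \sum_p (corr w p : nat))%N.
Proof.
move=> [mu0 mu1] hp.
pose T w := (\sum_p (corr w p : nat))%N.
have key : (\sum_p prob mu (fun w => corr w p) = \sum_w mu w * (T w)%:R)%R.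
  rewrite /prob.
  under eq_bigr => p _ do rewrite big_mkcond /=.
  rewrite exchange_big /=; apply: eq_bigr => w _.
  rewrite /T natr_sum big_distrr /=; apply: eq_bigr => p _.
  by case: (corr w p) => /=; rewrite ?mulr1 ?mulr0.
have lb : ((#|P|%:R * (2%:R / 3%:R)) <= \sum_p prob mu (fun w => corr w p))%R.
  apply: le_trans (ler_sum _ (fun p _ => hp p)).
  by rewrite sumr_const mulr_natl.
case: (boolP [exists w, (2 * #|P| <= 3 * T w)%N]) => [/existsP [w hw]|/existsPn H].
  by exists w.
exfalso.
have hle : (\sum_w mu w * (3 * T w)%:R <= \sum_w mu w * (2 * #|P|).-1%:R)%R.
  apply: ler_sum => w _; apply: ler_wpM2l => //; rewrite ler_nat.
  have := H w; rewrite -ltnNge; lia.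
move: hle; rewrite -big_distrl /= mu1 mul1r.
under eq_bigr => w _ do rewrite natrM mulrCA.
rewrite -big_distrr /= -key.
have hP : (0 < #|P|)%N.
  case: (pickP [pred w : Omega | true]) => [w _|h0].
    have := H w; rewrite -ltnNge; lia.
  move: mu1; rewrite big_pred0 // => e; lra.
have e2 : ((2 * #|P|).-1%:R = 2%:R * #|P|%:R - 1 :> R)%R.
  rewrite -natrM; have h : ((2 * #|P|).-1 + 1 = 2 * #|P|)%N by lia.
  move: h; set t := (2 * #|P|).-1 => h; by rewrite -h natrD addrK.
rewrite e2 => h.
move: lb h; set X := (\sum_p prob mu (corr^~ p))%R; set c := ((#|P|)%:R : R)%R.
lra.
Qed.

Lemma final_arith (N k s : nat) :
  4480 <= N.+1 -> 1 <= k -> 20 * k <= N.+1 ->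
  (N %/ (10 * (k.+1 %/ 2)) * (k.+1 %/ 2) * (k.+1 %/ 2)) < 7 * (s + 4) ->
  N.+1 * k <= 1120 * s.
Proof.
move=> hn hk h20 hq.
set d := k.+1 %/ 2 in hq.
have hd : 1 <= d /\ 2 * d <= k.+1 /\ k <= 2 * d by rewrite /d; lia.
case: hd => hd1 [hd2 hd3].
have hD : 0 < 10 * d by lia.
set L := N %/ (10 * d) in hq.
have hL1 : N < L.+1 * (10 * d) by apply: ltn_ceil.
have hL2 : 1 <= L by rewrite /L divn_gt0 //; lia.
clearbody L d.
have h4 : N.+1 <= 20 * d * L by nia.
have h5 : N.+1 * k <= 20 * d * L * (2 * d) by apply: leq_mul.
have h6 : 20 * d * L * (2 * d) = 40 * (L * d * d) by ring.
have h7 : N.+1 <= N.+1 * k by rewrite leq_pmulr.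
lia.
Qed.

Theorem mainTheorem9 :
  forall alpha : nat, (1 <= alpha)%N ->
  exists C : R, (0 < C)%R /\
  exists c : R, (0 < c)%R /\
  exists N0 : nat,
  forall n k : nat, (N0 <= n)%N -> (1 <= k)%N -> (k%:R <= c * n%:R)%R ->
  forall (s : nat) (Omega : finType) (mu : Omega -> R) (A : Omega -> stream_alg n s),
    is_distr mu ->
    (forall st : seq (item n),
        valid_instance k st ->
        (exists S, feasible_aug k st S) ->
        (2%:R / 3%:R <= prob mu (fun w => approx_solution k alpha st (run_alg (A w) st)))%R) ->
    (C * n%:R * k%:R <= s%:R)%R.
Proof.
move=> alpha halpha.
exists (1 / 1120%:R)%R; split; first lra.
exists (1 / 20%:R)%R; split; first lra.
exists 4480 => n k hn hk hkn s Omega mu A hmu hyp.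
have h20 : (20 * k <= n)%N.
  have : ((20 * k)%:R <= n%:R :> R)%R by rewrite natrM; lra.
  by rewrite ler_nat.
have hnk : (n * k <= 1120 * s)%N.
  case: n hn h20 hkn A hyp => [//|N] hn h20 hkn A hyp.
  pose d := k.+1 %/ 2.
  pose L := N %/ (10 * d).
  pose B := 5 * L.
  have hd1 : (0 < d)%N by rewrite /d; lia.
  have h2d : (2 * d <= k.+1)%N by rewrite /d; lia.
  have hB : (2 * d * B <= N)%N.
    have := leq_divM N (10 * d); rewrite -/L /B => h; nia.
  have hL : (0 < L)%N.
    rewrite /L divn_gt0; last by lia.
    rewrite /d; lia.
  pose J := ('I_B * ('I_d * 'I_d))%type.
  have hJ : #|{: J}| = 5 * (L * d * d).
    by rewrite card_prod card_prod !card_ord /B; ring.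
  have hq : (0 < L * d * d)%N by rewrite !muln_gt0 hL hd1.
  pose corr w (p : {ffun J -> bool} * J) :=
    approx_solution k alpha (inst N k p.1 p.2) (run_alg (A w) (inst N k p.1 p.2)).
  have hp : forall p, (2%:R / 3%:R <= prob mu (fun w => corr w p))%R.
    move=> [x i]; have [hv [hf _]] := inst_props hk h2d hB x i.
    exact: hyp.
  have [w hw] := avg2 hmu hp.
  pose f (x : {ffun J -> bool}) := foldl (fun m y => sa_step (A w) y m) (sa_init (A w)) (pfx N x).
  pose g (σ : s.-tuple bool) (j : J) :=
    sa_out (A w) (foldl (fun m y => sa_step (A w) y m) σ (query N k j)) != set0.
  have hcorr : forall p, corr w p -> g (f p.1) p.2 == p.1 p.2.
    move=> [x j] /= hc; have [_ [_ h3]] := inst_props hk h2d hB x j.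
    have := h3 alpha _ hc; rewrite /run_alg /inst foldl_cat => <-.
    by [].
  have hidx : (2 * #|{: J}| * 2 ^ #|{: J}| <= 3 * \sum_(x : {ffun J -> bool}) \sum_(j : J) (g (f x) j == x j : nat))%N.
    rewrite (pair_big xpredT xpredT (fun x j => (g (f x) j == x j : nat))) /=.
    apply: leq_trans _ (leq_trans hw _).
      have -> : #|{: {ffun J -> bool} * J}| = 2 ^ #|{: J}| * #|{: J}|.
        by rewrite card_prod card_ffun card_bool.
      by rewrite mulnA mulnAC.
    rewrite leq_mul2l; apply/orP; right; apply: leq_sum => p _.
    by case hc: (corr w p) => //=; rewrite (hcorr p hc).
  have := index_lb hJ hq hidx; rewrite card_tuple card_bool => /exp_bound hs.
  exact: final_arith hn hk h20 hs.
have : ((n * k)%:R <= (1120 * s)%:R :> R)%R by rewrite ler_nat.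
rewrite !natrM => h.
have hn0 : (0 <= n%:R :> R)%R by rewrite ler0n.
nra.
Qed.
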